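(* Let $\phi(x_1,\dots,x_n)=\bigwedge_{i=1}^m (c_{i1}\lor\cdots\lor c_{ik_i})$ be a CNF formula, where each $c_{ij}$ is a literal $x_l$ or $\lnot x_l$. Introduce fresh variables $y_1,\dots,y_m$ and define the 2-CNF formula $$\psi(x_1,\dots,x_n,y_1,\dots,y_m)=\bigwedge_{i=1}^m\bigwedge_{j=1}^{k_i}(\lnot c_{ij}\lor\lnot y_i).$$ Then $$\#(\phi)=\#\mathrm{SAT}_\pm\big(\psi,\{y_1,\dots,y_m\}\big),$$ where $\#(\phi)$ is the number of satisfying assignments of $\phi$.
   Context: For a CNF formula $f$ on variables $z_1,\dots,z_N$ and a set $S$ of its variables, $\#\mathrm{SAT}_\pm(f,S)$ is the sum of $f(\vec z)$ over assignments $\vec z$ in which the XOR of the variables in $S$ is $0$, minus the sum of $f(\vec z)$ over assignments in which that XOR is $1$. *)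

(* Defs.v *)
From mathcomp Require Import all_boot all_algebra.
Set Implicit Arguments. Unset Strict Implicit. Unset Printing Implicit Defensive.
Import GRing.Theory.

(* A literal over variables 'I_N: (l, true) is x_l, (l, false) is ~ x_l. *)
Definition lit (N : nat) := ('I_N * bool)%type.
Definition clause (N : nat) := seq (lit N).
Definition cnf (N : nat) := seq (clause N).

Definition assignment (N : nat) := {ffun 'I_N -> bool}.

Definition eval_lit N (z : assignment N) (c : lit N) : bool :=
  if c.2 then z c.1 else ~~ z c.1.
Definition eval_clause N (z : assignment N) (C : clause N) : bool :=
  has (eval_lit z) C.
Definition eval_cnf N (f : cnf N) (z : assignment N) : bool :=
  all (eval_clause z) f.

Definition count_sat N (f : cnf N) : nat := #|[set z : assignment N | eval_cnf f z]|.

Definition xor_on N (S : {set 'I_N}) (z : assignment N) : bool :=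
  \big[addb/false]_(j in S) z j.

Definition sharpSAT_pm N (f : cnf N) (S : {set 'I_N}) : int :=
  (\sum_(z : assignment N | ~~ xor_on S z) (eval_cnf f z : nat)%:Z -
   \sum_(z : assignment N | xor_on S z) (eval_cnf f z : nat)%:Z)%R.

Definition neg_lit N (c : lit N) : lit N := (c.1, ~~ c.2).

Definition x_lit n m (c : lit n) : lit (n + m) := (lshift m c.1, c.2).
Definition y_var n m (i : 'I_m) : 'I_(n + m) := rshift n i.

Definition psi_of n (phi : cnf n) : cnf (n + size phi) :=
  flatten [seq [seq [:: neg_lit (x_lit (size phi) c); (y_var n i, false)]
               | c <- nth [::] phi i] | i <- enum 'I_(size phi)].

Definition y_set n m : {set 'I_(n + m)} := [set y_var n i | i : 'I_m].

(* Main.v *)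
Require Import Defs.
From mathcomp Require Import all_boot all_algebra.
Import GRing.Theory.
Local Open Scope ring_scope.

Set Implicit Arguments.
Definition bz (b : bool) : int := (b : nat)%:Z.
Definition sg (b : bool) : int := if b then -1 else 1.

Definition join n m (x : assignment n) (y : assignment m) : assignment (n + m) :=
  [ffun k => match fintype.split k with inl l => x l | inr r => y r end].
Definition splt n m (z : assignment (n + m)) : assignment n * assignment m :=
  ([ffun l => z (lshift m l)], [ffun i => z (rshift n i)]).

Lemma join_l n m (x : assignment n) (y : assignment m) (l : 'I_n) : join x y (lshift m l) = x l.
Proof. by rewrite /join ffunE (unsplitK (inl _ l)). Qed.
Lemma join_r n m (x : assignment n) (y : assignment m) (i : 'I_m) : join x y (rshift n i) = y i.
Proof. by rewrite /join ffunE (unsplitK (inr _ i)). Qed.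

Lemma join_bij n m : bijective (fun p : assignment n * assignment m => join p.1 p.2).
Proof.
exists (@splt n m).
- by case=> x y; rewrite /splt; congr pair; apply/ffunP=> k; rewrite ffunE ?join_l ?join_r.
- move=> z; apply/ffunP=> k; rewrite /join ffunE /splt.
  by case: splitP => j Hk; rewrite ffunE; congr (z _); apply: val_inj; rewrite /= Hk.
Qed.

Lemma all_bz T (P : pred T) s : bz (all P s) = \prod_(i <- s) bz (P i).
Proof. elim: s => [|a s IH]; first by rewrite big_nil.
by rewrite big_cons /= -IH /bz; case: (P a); case: (all P s). Qed.

Lemma all_or T (a : pred T) (b : bool) s :
  all (fun c => ~~ a c || ~~ b) s = b ==> ~~ has a s.
Proof. by case: b; rewrite /= -?all_predC; elim: s => //= c s ->; rewrite ?orbF ?orbT. Qed.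

Lemma all_flatten T (P : pred T) (ss : seq (seq T)) :
  all P (flatten ss) = all (all P) ss.
Proof. by elim: ss => //= s ss IH; rewrite all_cat IH. Qed.

Lemma sg_xor I (r : seq I) P (F : I -> bool) :
  sg (\big[addb/false]_(i <- r | P i) F i) = \prod_(i <- r | P i) sg (F i).
Proof.
apply: (big_morph sg) => //= a b; rewrite /sg; case: a; case: b => //=; by rewrite ?mulrN ?mulr1 ?mulN1r ?opprK.
Qed.

Theorem mainTheorem3 (n : nat) (phi : cnf n) :
  ((count_sat phi)%:Z = sharpSAT_pm (psi_of phi) (y_set n (size phi)))%R.
Proof.
set m := size phi.
have -> : sharpSAT_pm (psi_of phi) (y_set n m) =
   \sum_z sg (xor_on (y_set n m) z) * bz (eval_cnf (psi_of phi) z).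
  rewrite /sharpSAT_pm [RHS](bigID (fun z => ~~ xor_on (y_set n m) z)) /=.
  congr (_ + _).
    by apply: eq_bigr => z /negbTE ->; rewrite /sg mul1r.
  rewrite -sumrN; apply: eq_big => [z|z]; first by rewrite negbK.
  by move=> ->; rewrite /sg mulN1r.
rewrite (reindex _ (onW_bij _ (join_bij n m))) /=.
rewrite -(pair_big predT predT (fun x y => sg (xor_on (y_set n m) (join x y)) *
   bz (eval_cnf (psi_of phi) (join x y)))) /=.
have -> : count_sat phi = (\sum_x (eval_cnf phi x : nat))%N.
  by rewrite /count_sat -sum1_card big_mkcond /=; apply: eq_bigr => x _; rewrite inE; case: eval_cnf.
rewrite (big_morph Posz PoszD erefl).
apply: eq_bigr => x _.
transitivity (\sum_(y : assignment m) \prod_(i < m)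
   (sg (y i) * bz (y i ==> ~~ eval_clause x (nth [::] phi i)))); last first.
  apply: eq_bigr => y _; rewrite big_split /=; congr (_ * _).
  - rewrite /xor_on /y_set big_imset /=; last by move=> i j _ _; apply: rshift_inj.
    by rewrite sg_xor; apply: eq_bigr => i _; rewrite /y_var join_r.
  - rewrite /eval_cnf /psi_of all_flatten all_map all_bz big_enum /=.
    apply: eq_bigr => i _; rewrite all_map -/m.
    rewrite -(all_or (eval_lit x)); congr bz; apply: eq_all => c /=.
    rewrite /eval_clause /= orbF /eval_lit /= /y_var join_r /=.
    by case: c => l b /=; case: b; rewrite join_l ?negbK.
transitivity (\prod_(i < m) \sum_(b : bool)
   (sg b * bz (b ==> ~~ eval_clause x (nth [::] phi i)))); last first.
  exact: bigA_distr_bigA.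
rewrite -[Posz _]/(bz (eval_cnf phi x)).
rewrite /eval_cnf (all_bz (eval_clause x) phi) (big_nth [::]) big_mkord.
apply: eq_bigr => i _; rewrite big_bool /= /sg /bz.
by case: eval_clause; rewrite /= ?mulr0 ?mulr1 ?add0r ?addr0 ?mulN1r.
Qed.
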